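(* Let $k \in \mathbb{N}$, and let $a(0) \leqslant a(1)\leqslant \ldots \leqslant a(k)$ be positive integers. Let $c$ be the largest real root of the polynomial equation $x^{k+1} = \sum_{i = 0}^k a(i)x^i$. Then there exists a hereditary property of ordered graphs $\mathcal{P}$ with $|\mathcal{P}_n| = c^{(1+o(1))n}$ as $n\to\infty$.
   Context: An ordered graph of order $n$ is a graph on vertex set $[n]$ with the natural order. A hereditary property of ordered graphs is a collection of ordered graphs closed under order-preserving isomorphism and under taking induced ordered subgraphs (subgraphs induced via injective order-preserving maps preserving adjacency and non-adjacency). $\mathcal{P}_n$ denotes the set of members of $\mathcal{P}$ with vertex set $[n]$. *)

(* Defs.v *)
From mathcomp Require Import all_boot.
From Stdlib Require Import Reals.
Set Implicit Arguments. Unset Strict Implicit. Unset Printing Implicit Defensive.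

(* An ordered graph of order n on vertex set [n] = 'I_n is encoded by its edge
   set, each edge {i,j} with i < j stored as the pair (i, j). *)
Definition ograph n (E : {set 'I_n * 'I_n}) : bool :=
  [forall e in E, (e.1 < e.2)%N].

Definition oprop := forall n : nat, pred {set 'I_n * 'I_n}.

Definition induced m n (f : 'I_m -> 'I_n) (E : {set 'I_n * 'I_n})
  : {set 'I_m * 'I_m} :=
  [set e : 'I_m * 'I_m | (e.1 < e.2)%N && ((f e.1, f e.2) \in E)].

(* Since the only order-preserving bijection of [n] is the identity, closure
   under order-preserving isomorphism is automatic in this encoding; hereditary
   means closure under induced ordered subgraphs. *)
Definition hereditary (P : oprop) : Prop :=
  forall m n (f : 'I_m -> 'I_n),
    (forall i j : 'I_m, (i < j)%N -> (f i < f j)%N) ->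
    forall E, ograph E -> P n E -> P m (induced f E).

Definition Pn (P : oprop) (n : nat) : {set {set 'I_n * 'I_n}} :=
  [set E | ograph E && P n E].

Open Scope R_scope.

Definition charpoly_eq (k : nat) (a : nat -> nat) (x : R) : Prop :=
  x ^ (S k) = sum_f_R0 (fun i => INR (a i) * x ^ i) k.

(* Main.v *)
Require Import Defs.
From mathcomp Require Import all_boot zify.
From Stdlib Require Import Reals Lra Lia ClassicalEpsilon.
Set Implicit Arguments. Unset Strict Implicit. Unset Printing Implicit Defensive.

Local Open Scope nat_scope.

Definition letter := (bool * nat * nat)%type.
Definition mk (l : nat) : letter := (true, l, 0).
Definition d0 : letter := (false, 0, 0).

Definition adjT (x y : letter) : bool :=
  if x.1.1 then ~~ y.1.1 && (x.1.2 == y.2) else ~~ y.1.1 && (x.1.2 == y.1.2).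

Definition buildP n (tau : 'I_n -> letter) : {set 'I_n * 'I_n} :=
  [set e : 'I_n * 'I_n | (e.1 < e.2) && adjT (tau e.1) (tau e.2)].

Definition Sset n (tau : 'I_n -> letter) (i : 'I_n) : {set 'I_n} :=
  [set u : 'I_n | (i < u) && ~~ (tau u).1.1 && ((tau u).1.2 == (tau i).1.2)].

Definition validT (k : nat) (a : nat -> nat) n (tau : 'I_n -> letter) : Prop :=
  (forall i j : 'I_n, i < j -> (tau j).1.1 -> (tau i).1.1) /\
      (forall i j : 'I_n, i < j -> (tau i).1.1 -> (tau j).1.1 -> (tau i).1.2 < (tau j).1.2) /\
      (forall i : 'I_n, (tau i).1.1 -> 0 < (tau i).1.2 <= (a k).-1) /\
      (forall i j : 'I_n, i < j -> ~~ (tau i).1.1 -> ~~ (tau j).1.1 -> (tau i).1.2 <= (tau j).1.2) /\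
      (forall i j : 'I_n, ~~ (tau i).1.1 -> ~~ (tau j).1.1 -> (tau i).1.2 = (tau j).1.2 -> (tau i).2 = (tau j).2) /\
      (forall i : 'I_n, ~~ (tau i).1.1 -> #|Sset tau i| <= k /\ (tau i).2 < a (k - #|Sset tau i|)).

Definition PP (k : nat) (a : nat -> nat) : oprop := fun n E =>
  if excluded_middle_informative (exists tau : 'I_n -> letter, validT k a tau /\ E = buildP tau)
  then true else false.

Arguments PP : clear implicits.

Lemma PPP k a n E : PP k a n E <-> exists tau : 'I_n -> letter, validT k a tau /\ E = buildP tau.
Proof. rewrite /PP; case: excluded_middle_informative => //. Qed.

Lemma amono (k : nat) (a : nat -> nat) :
  (forall i : nat, leq (S i) k -> leq (a i) (a (S i))) ->
  forall i j, i <= j -> j <= k -> a i <= a j.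
Proof.
move=> Hm i j Hij; elim: j Hij => [|j IH] Hij Hj.
  by have -> : i = 0 by lia.
case: (ltngtP i j.+1) Hij => // [Hl|->] _ ; last by [].
apply: leq_trans (IH _ _) (Hm _ Hj); lia.
Qed.

Lemma induced_buildP m n (f : 'I_m -> 'I_n) tau :
  (forall i j : 'I_m, i < j -> f i < f j) ->
  induced f (buildP tau) = buildP (fun i => tau (f i)).
Proof.
move=> Hf; apply/setP => -[i j]; rewrite !inE /=.
case: (ltnP i j) => //= Hij; by rewrite Hf.
Qed.

Lemma hereditary_PP k a :
  (forall i : nat, leq (S i) k -> leq (a i) (a (S i))) -> hereditary (PP k a).
Proof.
move=> Hm m n f Hf E _ /PPP [tau [[V1 [V2 [V3 [V4 [V5 V6]]]]] ->]].
apply/PPP; exists (fun i => tau (f i)); split; last by rewrite induced_buildP.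
have finj : injective f.
  move=> i j Hij; apply/eqP; case: (ltngtP i j) => // H.
  - by have := Hf _ _ H; rewrite Hij ltnn.
  - by have := Hf _ _ H; rewrite Hij ltnn.
  - by apply/eqP/val_inj.
split; first by move=> i j /Hf; apply: V1.
split; first by move=> i j /Hf; apply: V2.
split; first by move=> i; apply: V3.
split; first by move=> i j /Hf; apply: V4.
split; first by move=> i j; apply: V5.
- move=> i Hi; have [W1 W2] := V6 _ Hi.
  have Hc : #|Sset (fun i0 => tau (f i0)) i| <= #|Sset tau (f i)|.
    rewrite -(card_imset _ finj); apply: subset_leq_card; apply/subsetP => y /imsetP [u].
    rewrite !inE => /andP [/andP [H1 H2] H3] ->; rewrite H2 H3 Hf //.
  split; first lia.
  apply: leq_trans W2 _; apply: amono Hm _ _ _ _; lia.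
Qed.

Local Open Scope nat_scope.

Definition run (k : nat) (p : nat * nat) : seq letter :=
  [seq (false, p.2, k - p.1 - d) | d <- iota 0 (k.+1 - p.1)].

Definition choices (k : nat) (a : nat -> nat) (m : nat) : seq (nat * nat) :=
  [seq (i, t) | i <- [seq i <- iota 0 k.+1 | k.+1 - i <= m], t <- iota 0 (a i)].

Fixpoint genu (k : nat) (a : nat -> nat) (u m : nat) : seq (seq letter) :=
  match u with
  | 0 => [:: [::]]
  | u'.+1 => if m is 0 then [:: [::]] else
      [seq run k p ++ w | p <- choices k a m, w <- genu k a u' (m - (k.+1 - p.1))]
  end.

Definition validB (k : nat) (a : nat -> nat) (w : seq letter) : Prop :=
  (forall x, x \in w -> ~~ x.1.1 && (x.2 <= k) && (x.1.2 < a (k - x.2))) /\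
  (forall i, i.+1 < size w -> 0 < (nth d0 w i).2 ->
      nth d0 w i.+1 = (false, (nth d0 w i).1.2, (nth d0 w i).2.-1)) /\
  (forall i, i < size w -> i + (nth d0 w i).2 < size w).

Lemma chainB k a w i d : validB k a w -> i < size w -> d <= (nth d0 w i).2 ->
  nth d0 w (i + d) = (false, (nth d0 w i).1.2, (nth d0 w i).2 - d).
Proof.
move=> [B1 [B2 B3]] Hi; elim: d => [|d IH] Hd.
  rewrite addn0 subn0.
  have := B1 _ (mem_nth d0 Hi); case: (nth d0 w i) => [[b t] r] /=.
  by case: b.
have H3 := B3 _ Hi.
have IH' := IH (ltnW Hd).
rewrite addnS B2.
- rewrite IH' /=; f_equal; lia.
- lia.
- rewrite IH' /=; lia.
Qed.

Lemma validB_drop k a w s : validB k a w -> validB k a (drop s w).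
Proof.
move=> [B1 [B2 B3]]; split; first by move=> x /mem_drop /B1.
rewrite size_drop; split.
  move=> i Hi Hr; rewrite !nth_drop addnS B2 //; rewrite nth_drop in Hr; lia.
move=> i Hi; rewrite nth_drop; have := B3 (s + i); lia.
Qed.

Lemma genu_mem k a u w : validB k a w -> size w <= u -> w \in genu k a u (size w).
Proof.
elim: u w => [|u IH] w Hw Hs.
  by case: w Hw Hs.
case: w Hw Hs => [|x w'] Hw Hs; first by [].
set w := x :: w' in Hw Hs *.
have [B1 [B2 B3]] := Hw.
have Hx : x \in w by rewrite inE eqxx.
have := B1 _ Hx; case Ex: x => [[b t] r] /= /andP [/andP [Hb Hrk] Ht].
have Hr : r < size w by have := B3 0 isT; rewrite /= Ex.
have Hsw : size w = (size w').+1 by [].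
have Htake : take r.+1 w = run k (k - r, t).
  have Hst : size (take r.+1 w) = r.+1 by rewrite size_takel.
  apply: (@eq_from_nth _ d0).
    rewrite Hst size_map size_iota /=; lia.
  move=> d; rewrite Hst => Hd'.
  rewrite nth_take // /run (nth_map 0); last by rewrite size_iota /=; lia.
  rewrite nth_iota; last by rewrite /=; lia.
  have := @chainB k a w 0 d Hw isT; rewrite /= Ex /= => ->; last by lia.
  f_equal; lia.
rewrite -(cat_take_drop r.+1 w) Htake /=.
have -> : size w' = (size w).-1 by [].
apply: (allpairs_f_dep (fun p w0 => run k p ++ w0)).
  rewrite /choices; apply/allpairsPdep; exists (k - r), t; split => //.
    by rewrite mem_filter mem_iota; apply/andP; split; lia.
  rewrite mem_iota /=; lia.
have -> : (size w).-1.+1 - (k.+1 - (k - r)) = size (drop r.+1 w).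
  by rewrite size_drop /=; lia.
apply: IH; first exact: (validB_drop r.+1 Hw).
by rewrite size_drop /=; lia.
Qed.

Local Open Scope nat_scope.

Lemma size_run k p : size (run k p) = k.+1 - p.1.
Proof. by rewrite size_map size_iota. Qed.

Lemma head_run k p w : p.1 <= k -> nth d0 (run k p ++ w) 0 = (false, p.2, k - p.1).
Proof.
move=> Hp; rewrite nth_cat size_run ifT; last by lia.
rewrite (nth_map 0) ?size_iota /=; last by lia.
by rewrite nth_iota /=; [f_equal; lia | lia].
Qed.

Lemma choices_mem k a m p : p \in choices k a m -> [/\ p.1 <= k, k.+1 - p.1 <= m & p.2 < a p.1].
Proof.
move/allpairsPdep => [i [t [Hi Ht ->]]] /=.
move: Hi; rewrite mem_filter mem_iota => /andP [H1 H2].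
by move: Ht; rewrite mem_iota; split; lia.
Qed.

Lemma choices_uniq k a m : uniq (choices k a m).
Proof.
apply: allpairs_uniq_dep.
- by apply: filter_uniq; apply: iota_uniq.
- by move=> x _; apply: iota_uniq.
- by move=> [x1 y1] [x2 y2] _ _ /= [-> ->].
Qed.

Lemma genu_uniq k a u m : uniq (genu k a u m).
Proof.
elim: u m => [|u IH] [|m] //=.
apply: allpairs_uniq_dep; first exact: choices_uniq.
  by move=> x _; apply: IH.
move=> [p1 w1] [p2 w2] /allpairsPdep [q1 [v1 [Hq1 _ [E1 _]]]] /allpairsPdep [q2 [v2 [Hq2 _ [E2 _]]]] /=.
subst q1 q2.
have [H11 _ _] := choices_mem Hq1; have [H21 _ _] := choices_mem Hq2.
move=> E.
have Hh := congr1 (nth d0 ^~ 0) E; rewrite /= !head_run // in Hh.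
case: Hh => Ht Hr.
have Hp : p1 = p2 by move: p1 p2 H11 H21 Ht Hr {Hq1 Hq2 E w1 w2 v1 v2} => [x1 y1] [x2 y2] /= *; f_equal; lia.
subst p2.
move/eqP: E; rewrite eqseq_cat // => /andP [_ /eqP ->].
by [].
Qed.

Lemma sumn_choices (s : seq nat) (a : nat -> nat) (g : nat -> nat) :
  sumn [seq g p.1 | p <- [seq (i, t) | i <- s, t <- iota 0 (a i)]] = sumn [seq a i * g i | i <- s].
Proof.
elim: s => [|i s IH]; first by [].
rewrite allpairs_cons map_cat sumn_cat IH /=; congr (_ + _).
have -> : forall l : seq nat, [seq g p.1 | p <- [seq (i, t) | t <- l]] = nseq (size l) (g i).
  by elim => //= x l ->.
by rewrite sumn_nseq size_iota mulnC.
Qed.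

Lemma size_genu k a u m : 0 < m ->
  size (genu k a u.+1 m) = sumn [seq a i * size (genu k a u (m - (k.+1 - i))) | i <- [seq i <- iota 0 k.+1 | k.+1 - i <= m]].
Proof.
case: m => // m _ /=; rewrite size_allpairs_dep.
by rewrite (sumn_choices _ a (fun i => size (genu k a u (m.+1 - (k.+1 - i))))).
Qed.

Local Open Scope nat_scope.

Lemma mem_cons_tl (y x : nat) s : x \in s -> x \in y :: s.
Proof. by rewrite inE => ->; rewrite orbT. Qed.

Definition sR (s : seq nat) (g : nat -> R) : R := foldr (fun i acc => (g i + acc)%R) 0%R s.

Lemma sR_cat s1 s2 g : sR (s1 ++ s2) g = (sR s1 g + sR s2 g)%R.
Proof. elim: s1 => [|i s IH] /=; [lra | rewrite IH; lra]. Qed.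

Lemma INR_sumn s h : INR (sumn [seq h i | i <- s]) = sR s (fun i => INR (h i)).
Proof. elim: s => [|i s IH] //=; by rewrite plus_INR IH. Qed.

Lemma sR_le s g1 g2 : (forall i, i \in s -> (g1 i <= g2 i)%R) -> (sR s g1 <= sR s g2)%R.
Proof.
elim: s => [|i s IH] H /=; first lra.
have := H i (mem_head _ _); have := IH (fun j Hj => H j (mem_cons_tl i Hj)); lra.
Qed.

Lemma sR_eq s g1 g2 : (forall i, i \in s -> g1 i = g2 i) -> sR s g1 = sR s g2.
Proof.
elim: s => [|i s IH] H //=.
by rewrite (H i (mem_head _ _)) (IH (fun j Hj => H j (mem_cons_tl i Hj))).
Qed.

Lemma sR_scal s g x : (x * sR s g)%R = sR s (fun i => x * g i)%R.
Proof. elim: s => [|i s IH] /=; [lra | rewrite -IH; lra]. Qed.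

Lemma sR_ge0 s g : (forall i, (0 <= g i)%R) -> (0 <= sR s g)%R.
Proof. move=> H; elim: s => [|i s IH] /=; [lra | have := H i; lra]. Qed.

Lemma sR_filter s P g : (forall i, (0 <= g i)%R) -> (sR [seq i <- s | P i] g <= sR s g)%R.
Proof.
move=> H; elim: s => [|i s IH] /=; first lra.
case: (P i) => /=; first lra.
have := H i; lra.
Qed.

Lemma sR_filter_all s (P : pred nat) g : (forall i, i \in s -> P i) -> sR [seq i <- s | P i] g = sR s g.
Proof. by move=> H; rewrite (eq_in_filter (a2 := predT)) ?filter_predT. Qed.

Lemma sR_ge_term s g j : (forall i, (0 <= g i)%R) -> j \in s -> (g j <= sR s g)%R.
Proof.
move=> H; elim: s => [|i s IH] //=; rewrite inE => /orP [/eqP ->|Hj].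
  have := sR_ge0 s H; lra.
have := IH Hj; have := H i; lra.
Qed.

Lemma sR_iota g k : sR (iota 0 k.+1) g = sum_f_R0 g k.
Proof.
elim: k => [|k IH]; first by rewrite /=; lra.
rewrite -(addn1 k.+1) iotaD sR_cat IH /= add0n; lra.
Qed.

Local Open Scope nat_scope.

Lemma genu0 k a u : genu k a u 0 = [:: [::]].
Proof. by case: u. Qed.

Lemma sumn_ge_term (s : seq nat) h x : x \in s -> h x <= sumn [seq h i | i <- s].
Proof.
elim: s => [|i s IH] //=; rewrite inE => /orP [/eqP ->|Hx]; first by apply: leq_addr.
by apply: leq_trans (IH Hx) (leq_addl _ _).
Qed.

Lemma filt_mem k m i : i \in [seq i <- iota 0 k.+1 | k.+1 - i <= m] -> i <= k /\ k.+1 - i <= m.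
Proof. by rewrite mem_filter mem_iota => /andP [H1 H2]; split; lia. Qed.

Lemma gen_upper k a c : (1 <= c)%R -> charpoly_eq k a c ->
  forall u m, m <= u -> (INR (size (genu k a u m)) <= c ^ m)%R.
Proof.
move=> Hc Hroot; elim=> [|u IH] m Hm.
  have -> : m = 0 by lia.
  by rewrite /=; lra.
case: (posnP m) => [->|Hm0]; first by rewrite genu0 /=; lra.
rewrite size_genu // INR_sumn.
have HK : (0 < c ^ k.+1)%R by apply: pow_lt; lra.
apply: (Rmult_le_reg_l (c ^ k.+1)) => //.
rewrite sR_scal.
apply: Rle_trans (_ : sR (iota 0 k.+1) (fun i => INR (a i) * c ^ i * c ^ m)%R <= _)%R.
  apply: Rle_trans (sR_filter _ _ _).
    apply: sR_le => i /filt_mem [Hi1 Hi2].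
    have E : (c ^ k.+1 * c ^ (m - (k.+1 - i)) = c ^ i * c ^ m)%R.
      by rewrite -!pow_add; f_equal; lia.
    have H1 := IH (m - (k.+1 - i)) ltac:(lia).
    have H2 := pos_INR (a i).
    rewrite mult_INR.
    have H3 : (c ^ k.+1 * INR (size (genu k a u (m - (k.+1 - i)))) <= c ^ k.+1 * c ^ (m - (k.+1 - i)))%R.
      by apply: Rmult_le_compat_l; lra.
    have H4 := Rmult_le_compat_l _ _ _ H2 H3.
    rewrite E in H4; lra.
  move=> i /=; apply: Rmult_le_pos; last by apply: pow_le; lra.
  apply: Rmult_le_pos; [exact: pos_INR | by apply: pow_le; lra].
rewrite (sR_eq (g2 := fun i => c ^ m * (INR (a i) * c ^ i))%R); last by move=> i _; lra.
rewrite -sR_scal sR_iota -Hroot; lra.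
Qed.

Lemma gen_pos k a : (forall i : nat, leq i k -> leq 1 (a i)) ->
  forall u m, m <= u -> 0 < size (genu k a u m).
Proof.
move=> Hpos; elim=> [|u IH] m Hm; first by [].

case: (posnP m) => [->|Hm0]; first by rewrite genu0.
rewrite size_genu //.
have Hk : k \in [seq i <- iota 0 k.+1 | k.+1 - i <= m] by rewrite mem_filter mem_iota; apply/andP; split; lia.
apply: leq_trans (sumn_ge_term (fun i => a i * size (genu k a u (m - (k.+1 - i)))) Hk).
rewrite muln_gt0 Hpos //; apply: IH; lia.
Qed.

Lemma gen_lower k a c : (1 <= c)%R -> charpoly_eq k a c ->
  (forall i : nat, leq i k -> leq 1 (a i)) ->
  forall u m, m <= u -> (c ^ m <= c ^ k.+1 * INR (size (genu k a u m)))%R.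
Proof.
move=> Hc Hroot Hpos; elim=> [|u IH] m Hm.
  have -> : m = 0 by lia.
  rewrite genu0 /=; have := pow_R1_Rle c k.+1 Hc; rewrite /=; lra.
have HK1 : (1 <= c ^ k.+1)%R by apply: pow_R1_Rle.
case: (ltnP m k.+1) => Hmk.
  have Hs := gen_pos Hpos Hm.
  have Hs' : (1 <= INR (size (genu k a u.+1 m)))%R by apply: (le_INR 1); apply/leP.
  have := Rle_pow c m k.+1 Hc ltac:(apply/leP; lia).
  nra.
rewrite size_genu; last by lia.
rewrite INR_sumn sR_scal.
rewrite sR_filter_all; last by move=> i; rewrite mem_iota; lia.
apply: Rle_trans (_ : sR (iota 0 k.+1) (fun i => c ^ (m - k.+1) * (INR (a i) * c ^ i))%R <= _)%R.
  rewrite -sR_scal sR_iota -Hroot -pow_add; right; f_equal; lia.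
apply: sR_le => i; rewrite mem_iota => Hi.
have E : (c ^ (m - k.+1) * c ^ i = c ^ (m - (k.+1 - i)))%R by rewrite -pow_add; f_equal; lia.
have H1 := IH (m - (k.+1 - i)) ltac:(lia).
have H2 := pos_INR (a i).
rewrite mult_INR.
have H4 := Rmult_le_compat_l _ _ _ H2 H1.
rewrite -E in H4; lra.
Qed.

Local Open Scope nat_scope.

Lemma count_iota_int i j n : i <= j ->
  count (fun u => (i < u) && (u <= j)) (iota 0 n) = minn n j.+1 - minn n i.+1.
Proof.
move=> Hij; elim: n => [|n IH] //.
rewrite -(addn1 n) iotaD count_cat IH /= add0n addn0.
case: (ltnP i n) => H1; case: (leqP n j) => H2 /=; lia.
Qed.

Lemma card_int n i j : i <= j -> j < n -> #|[set u : 'I_n | (i < u) && (u <= j)]| = j - i.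
Proof.
move=> Hij Hj.
rewrite cardE /enum_mem size_filter -enumT.
have -> : count (mem [set u : 'I_n | (i < u) && (u <= j)]) (enum 'I_n)
   = count (fun u => (i < u) && (u <= j)) [seq val x | x <- enum 'I_n].
  by rewrite count_map; apply: eq_count => x; rewrite /= inE.
rewrite val_enum_ord.
rewrite count_iota_int //; lia.
Qed.

Section S.
End S.

Lemma block_after k a n (tau : 'I_n -> letter) : validT k a tau ->
  forall i j : 'I_n, i < j -> ~~ (tau i).1.1 -> ~~ (tau j).1.1.
Proof.
move=> [V1 _] i j Hij Hi; apply/negP => Hj.
by have := V1 i j Hij Hj; rewrite (negbTE Hi).
Qed.

Lemma S_char k a n (tau : 'I_n -> letter) : validT k a tau ->
  forall i j : 'I_n, i < j -> ~~ (tau i).1.1 ->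
  ((tau j).1.2 == (tau i).1.2) = (j <= i + #|Sset tau i|).
Proof.
move=> V i j Hij Hi; have V' := V; move: V' => [V1 [V2 [V3 [V4 [V5 V6]]]]].
have Hj := block_after V Hij Hi.
case: eqP => Hid.
- apply/esym.
  have Hsub : [set u : 'I_n | (i < u) && (u <= j)] \subset Sset tau i.
    apply/subsetP => u; rewrite !inE => /andP [H1 H2].
    have Hu := block_after V H1 Hi.
    rewrite H1 Hu /=; apply/eqP.
    have E1 := V4 _ _ H1 Hi Hu.
    case: (ltnP u j) => Huj.
    + have := V4 _ _ Huj Hu Hj; lia.
    + have -> : u = j by apply: val_inj; apply/eqP; rewrite eqn_leq H2.
      exact: Hid.
  have := subset_leq_card Hsub; rewrite card_int; [move=> HH | lia | by []].
  by rewrite -leq_subLR.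
- apply/esym/negbTE; rewrite -ltnNge.
  have Hsub : Sset tau i \subset [set u : 'I_n | (i < u) && (u <= j - 1)].
    apply/subsetP => u; rewrite !inE => /andP [/andP [H1 H2] /eqP H3].
    rewrite H1 /=; case: (ltnP u j) => Huj; first lia.
    exfalso; case: (ltnP j u) => Hju.
    + have := V4 _ _ Hju Hj H2; have := V4 _ _ Hij Hi Hj; lia.
    + have E : j = u by apply: val_inj; apply/eqP; rewrite eqn_leq Hju Huj.
      by apply: Hid; rewrite E.
  have := subset_leq_card Hsub; rewrite card_int; [move: #|Sset tau i| => s HH; lia | lia | have := ltn_ord j; lia].
Qed.

Lemma S_bound n (tau : 'I_n -> letter) (i : 'I_n) : i + #|Sset tau i| < n.
Proof.
have Hsub : Sset tau i \subset [set u : 'I_n | (i < u) && (u <= n - 1)].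
  apply/subsetP => u; rewrite !inE => /andP [/andP [H1 _] _].
  by rewrite H1 /=; have := ltn_ord u; lia.
have := subset_leq_card Hsub; have := ltn_ord i; rewrite card_int; [move: #|Sset tau i| => s; lia | have := ltn_ord i; lia | have := ltn_ord i; lia].
Qed.

Local Open Scope nat_scope.

Definition psiL n (tau : 'I_n -> letter) (i : 'I_n) : letter :=
  if (tau i).1.1 then (true, (tau i).1.2, 0) else (false, (tau i).2, #|Sset tau i|).
Definition psi n (tau : 'I_n -> letter) : seq letter := [seq psiL tau i | i <- enum 'I_n].

Definition adjW (w : seq letter) (i j : nat) : bool :=
  let x := nth d0 w i in let y := nth d0 w j in
  if x.1.1 then ~~ y.1.1 && (x.1.2 == y.1.2) else ~~ y.1.1 && (j <= i + x.2).

Definition buildW n (w : seq letter) : {set 'I_n * 'I_n} :=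
  [set e : 'I_n * 'I_n | (e.1 < e.2) && adjW w e.1 e.2].

Lemma size_psi n (tau : 'I_n -> letter) : size (psi tau) = n.
Proof. by rewrite size_map size_enum_ord. Qed.

Lemma nth_psi n (tau : 'I_n -> letter) (i : 'I_n) : nth d0 (psi tau) i = psiL tau i.
Proof. by rewrite (nth_map i) ?size_enum_ord // nth_ord_enum. Qed.

Lemma buildP_psi k a n (tau : 'I_n -> letter) : validT k a tau -> buildP tau = buildW n (psi tau).
Proof.
move=> V; apply/setP => -[i j]; rewrite !inE /=.
case: (ltnP i j) => //= Hij.
rewrite /adjW !nth_psi /psiL /adjT.
case Hi: (tau i).1.1; case Hj: (tau j).1.1 => //=.
by rewrite eq_sym (S_char V Hij) ?Hi.
Qed.

Fixpoint allLists (B p : nat) : seq (seq nat) :=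
  if p is p'.+1 then [::] :: [seq x :: l | x <- iota 1 B, l <- allLists B p'] else [:: [::]].

Lemma allLists_mem B p l : all (fun x => (0 < x) && (x <= B)) l -> size l <= p -> l \in allLists B p.
Proof.
elim: p l => [|p IH] [|x l] //= /andP [Hx Hl] Hs.
rewrite inE; apply/orP; right.
apply: (allpairs_f (fun x0 l0 => x0 :: l0)); first by rewrite mem_iota; lia.
exact: IH.
Qed.

Definition allW k a n : seq (seq letter) :=
  [seq map mk l ++ w | l <- allLists (a k).-1 (a k).-1, w <- genu k a n (n - size l)].

Lemma psiL_flag n (tau : 'I_n -> letter) i : (psiL tau i).1.1 = (tau i).1.1.
Proof. by rewrite /psiL; case: ifP. Qed.

Lemma nth_psiq n (tau : 'I_n -> letter) q (Hq : q < n) : nth d0 (psi tau) q = psiL tau (Ordinal Hq).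
Proof. exact: (nth_psi tau (Ordinal Hq)). Qed.

Lemma psi_mem k a n (tau : 'I_n -> letter) : validT k a tau -> psi tau \in allW k a n.
Proof.
move=> V; have V' := V; move: V' => [V1 [V2 [V3 [V4 [V5 V6]]]]].
set w := psi tau.
have Hsz : size w = n by rewrite size_psi.
set p := find (fun x : letter => ~~ x.1.1) w.
have Hp : p <= n by rewrite -Hsz find_size.
have Mark : forall q (Hq : q < n), (tau (Ordinal Hq)).1.1 = (q < p).
  move=> q Hq; case: (ltnP q p) => Hqp.
    have := before_find d0 Hqp; rewrite nth_psiq psiL_flag.
    by case: ((tau (Ordinal Hq)).1.1).
  have Hpn : p < n by lia.
  have Hhas : has (fun x : letter => ~~ x.1.1) w by rewrite has_find Hsz.
  have := nth_find d0 Hhas; rewrite -/p (nth_psiq tau Hpn) psiL_flag => Hb.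
  case: (ltnP p q) => Hpq.
    by apply/negbTE; apply: (block_after V (i := Ordinal Hpn)).
  have E : Ordinal Hq = Ordinal Hpn by apply: val_inj => /=; lia.
  by rewrite E; apply/negbTE.
set l := [seq x.1.2 | x <- take p w].
have Hsl : size l = p by rewrite size_map size_takel // Hsz.
have Hnthl : forall q (Hq : q < n), q < p -> nth 0 l q = (tau (Ordinal Hq)).1.2.
  move=> q Hq Hqp; rewrite (nth_map d0) ?size_takel ?Hsz // nth_take //.
  by rewrite nth_psiq /psiL Mark Hqp.
have Htake : take p w = map mk l.
  apply: (@eq_from_nth _ d0); first by rewrite size_map Hsl size_takel // Hsz.
  move=> q; rewrite size_takel ?Hsz // => Hqp.
  have Hq : q < n by lia.
  rewrite nth_take // (nth_map 0) ?Hsl // (Hnthl q Hq Hqp) nth_psiq /psiL Mark Hqp.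
  by [].
have Hw : w = map mk l ++ drop p w by rewrite -Htake cat_take_drop.
have Hall : all (fun x => (0 < x) && (x <= (a k).-1)) l.
  apply/(all_nthP 0) => q; rewrite Hsl => Hqp.
  have Hq : q < n by lia.
  rewrite (Hnthl q Hq Hqp); apply: V3; by rewrite Mark.
have Hu : uniq l.
  apply/(uniqP 0) => q1 q2; rewrite !inE Hsl => Hq1 Hq2.
  have Hq1' : q1 < n by lia.
  have Hq2' : q2 < n by lia.
  rewrite (Hnthl q1 Hq1' Hq1) (Hnthl q2 Hq2' Hq2) => E.
  case: (ltngtP q1 q2) => // H.
  - by have := V2 (Ordinal Hq1') (Ordinal Hq2') H; rewrite !Mark Hq1 Hq2 E ltnn => /(_ isT isT).
  - by have := V2 (Ordinal Hq2') (Ordinal Hq1') H; rewrite !Mark Hq1 Hq2 E ltnn => /(_ isT isT).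
have HlB : size l <= (a k).-1.
  rewrite -(size_iota 1 (a k).-1); apply: uniq_leq_size => // x Hx.
  move/allP: Hall => /(_ x Hx) /andP [H1 H2]; rewrite mem_iota; lia.
rewrite Hw /allW.
apply: (allpairs_f_dep (fun l0 w0 => map mk l0 ++ w0)); first exact: allLists_mem.
have -> : n - size l = size (drop p w) by rewrite size_drop Hsz Hsl.
apply: genu_mem; last by rewrite size_drop; lia.
have Hdn : forall q, q < size (drop p w) -> p + q < n by move=> q; rewrite size_drop; lia.
have Hnd : forall q (Hq : q < size (drop p w)),
    nth d0 (drop p w) q = (false, (tau (Ordinal (Hdn q Hq))).2, #|Sset tau (Ordinal (Hdn q Hq))|).
  move=> q Hq; rewrite nth_drop (nth_psiq tau (Hdn q Hq)) /psiL Mark ltnNge leq_addr /=; by [].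
split.
  move=> x /(nthP d0) [q Hq <-]; rewrite Hnd /=.
  have Hb : ~~ (tau (Ordinal (Hdn q Hq))).1.1 by rewrite Mark ltnNge leq_addr.
  by have [-> ->] := V6 _ Hb.
split.
  move=> q Hq1 Hpos.
  have Hq : q < size (drop p w) by lia.
  rewrite !Hnd /=; rewrite Hnd /= in Hpos.
  set o := Ordinal (Hdn q Hq) in Hpos *.
  set o1 := Ordinal (Hdn q.+1 Hq1).
  have Hb : ~~ (tau o).1.1 by rewrite Mark ltnNge leq_addr.
  have Hb1 : ~~ (tau o1).1.1 by rewrite Mark ltnNge leq_addr.
  have Hoo : o < o1 by rewrite /= addnS.
  have Hid : (tau o1).1.2 = (tau o).1.2.
    by apply/eqP; rewrite (S_char V Hoo Hb) /= addnS -addn1 leq_add2l.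
  rewrite (V5 _ _ Hb1 Hb Hid).
  have HS : Sset tau o = o1 |: Sset tau o1.
    apply/setP => u; rewrite !inE Hid.
    case: (eqVneq u o1) => [->|Hne] /=; first by rewrite Hoo Hb1 Hid eqxx.
    have Hne' : nat_of_ord u != p + q.+1 by [].
    move: Hne'; move: (nat_of_ord u) => uu Hne'.
    have -> : (p + q < uu) = (p + q.+1 < uu).
      by apply/idP/idP => H; lia.
    by [].
  have Hn : o1 \notin Sset tau o1 by rewrite inE ltnn.
  rewrite HS cardsU1 Hn /=.
  by [].
move=> q Hq; rewrite Hnd /= size_drop.
have := S_bound tau (Ordinal (Hdn q Hq)); rewrite /=.
move: #|_| => s; rewrite size_drop Hsz in Hq; lia.
Qed.

Local Open Scope nat_scope.

Definition pre0 (B : nat) : seq letter := map mk (iota 1 B).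

Definition goodV k a n (v : seq letter) : Prop :=
  exists w, [/\ v = pre0 (a k).-1 ++ w, validB k a w, size w = n - (a k).-1 & (a k).-1 <= n].

Lemma goodV_size k a n v : goodV k a n v -> size v = n.
Proof. by move=> [w [-> _ Hs HB]]; rewrite size_cat size_map size_iota Hs; lia. Qed.

Lemma goodV_pre k a n v q : goodV k a n v -> q < (a k).-1 -> nth d0 v q = (true, q.+1, 0).
Proof.
move=> [w [-> _ _ _]] Hq; rewrite nth_cat size_map size_iota Hq (nth_map 0) ?size_iota //.
by rewrite nth_iota // add1n.
Qed.

Lemma goodV_blk k a n v q : goodV k a n v -> (a k).-1 <= q < n ->
  [/\ ~~ (nth d0 v q).1.1, (nth d0 v q).2 <= k, (nth d0 v q).1.2 < a (k - (nth d0 v q).2)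
    & q + (nth d0 v q).2 < n].
Proof.
move=> [w [-> [B1 [B2 B3]] Hs HB]] /andP [H1 H2].
rewrite nth_cat size_map size_iota ltnNge H1 /=.
have Hq : q - (a k).-1 < size w by lia.
have := B1 _ (mem_nth d0 Hq); move/andP => [/andP [-> ->] ->]; split => //.
have := B3 _ Hq; lia.
Qed.

Lemma goodV_chain k a n v q d : goodV k a n v -> (a k).-1 <= q < n -> d <= (nth d0 v q).2 ->
  nth d0 v (q + d) = (false, (nth d0 v q).1.2, (nth d0 v q).2 - d).
Proof.
move=> Hg Hq Hd; have Hg' := Hg; move: Hg' => [w [E Hw Hs HB]].
have [_ _ _ Hn] := goodV_blk Hg Hq.
move: Hd Hn; rewrite E !nth_cat size_map size_iota.
move/andP: Hq => [H1 H2].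
rewrite !ltnNge H1 /=.
have -> : (a k).-1 <= q + d by lia.
move=> Hd Hn /=.
have -> : q + d - (a k).-1 = (q - (a k).-1) + d by lia.
apply: (chainB Hw) => //; lia.
Qed.

Lemma goodV_flag k a n v q : goodV k a n v -> q < n -> (nth d0 v q).1.1 = (q < (a k).-1).
Proof.
move=> Hg Hq; case: (ltnP q (a k).-1) => H.
  by rewrite (goodV_pre Hg H).
have [Hb _ _ _] := goodV_blk Hg (q := q) ltac:(apply/andP; split => //).
exact: negbTE.
Qed.

Lemma sameRun k a n v i j : goodV k a n v -> (a k).-1 <= i -> i < j -> j < n ->
  (i + (nth d0 v i).2 == j + (nth d0 v j).2) = (j <= i + (nth d0 v i).2).
Proof.
move=> Hg H1 H2 H3.
case: (leqP j (i + (nth d0 v i).2)) => Hj.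
  have := goodV_chain (d := j - i) Hg (q := i) ltac:(apply/andP; split; lia) ltac:(lia).
  have -> : i + (j - i) = j by lia.
  move=> ->; rewrite /=; apply/eqP; lia.
apply/negbTE; apply/eqP; lia.
Qed.

Definition tauV n (v : seq letter) : 'I_n -> letter := fun i =>
  let x := nth d0 v i in if x.1.1 then (true, x.1.2, 0) else (false, i + x.2, x.1.2).
Arguments tauV : clear implicits.

Lemma tauV_valid k a n v : goodV k a n v -> validT k a (tauV n v).
Proof.
move=> Hg.
have Fl : forall i : 'I_n, (nth d0 v i).1.1 = (i < (a k).-1) by move=> i; apply: goodV_flag Hg (ltn_ord i).
have Blk : forall i : 'I_n, ~~ (i < (a k).-1) -> (a k).-1 <= i < n by move=> i; rewrite -leqNgt (ltn_ord i) andbT.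
rewrite /validT /tauV.
split.
  move=> i j Hij; rewrite !Fl; case: ifP => Hj //= _; case: ifP => //; lia.
split.
  move=> i j Hij; rewrite !Fl; case: ifP => Hi //; case: ifP => Hj // _ _ /=.
  by rewrite (goodV_pre Hg Hi) (goodV_pre Hg Hj).
split.
  move=> i; rewrite Fl; case: ifP => Hi // _ /=; rewrite (goodV_pre Hg Hi) /=; lia.
split.
  move=> i j Hij; rewrite !Fl; case: ifP => Hi //; case: ifP => Hj // _ _ /=.
  have Hi' := Blk i (negbT Hi).
  case: (leqP j (i + (nth d0 v i).2)) => Hle.
    have := sameRun Hg (i := i) (j := j) ltac:(lia) Hij (ltn_ord j); rewrite Hle => /eqP ->; lia.
  lia.
split.
  move=> i j; rewrite !Fl; case: ifP => Hi //; case: ifP => Hj // _ _ /= E.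
  have Hi' := Blk i (negbT Hi); have Hj' := Blk j (negbT Hj).
  case: (ltngtP i j) => H.
  - have Hle : j <= i + (nth d0 v i).2 by lia.
    have := goodV_chain (d := j - i) Hg Hi' ltac:(lia).
    have -> : i + (j - i) = j by lia.
    by move=> ->.
  - have Hle : i <= j + (nth d0 v j).2 by lia.
    have := goodV_chain (d := i - j) Hg Hj' ltac:(lia).
    have -> : j + (i - j) = i by lia.
    by move=> ->.
  - by have -> : i = j by apply: val_inj.
move=> i; rewrite Fl; case: ifP => Hi // _ /=.
have Hi' := Blk i (negbT Hi).
have [_ Hrk Ht Hn] := goodV_blk Hg Hi'.
have HS : Sset (fun i0 : 'I_n => let x := nth d0 v i0 in if x.1.1 then (true, x.1.2, 0) else (false, i0 + x.2, x.1.2)) i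
          = [set u : 'I_n | (i < u) && (u <= i + (nth d0 v i).2)].
  apply/setP => u; rewrite !inE /= Fl Fl Hi /=.
  case: (ltnP i u) => Hiu //=.
  have -> : (u < (a k).-1) = false by lia.
  by rewrite /= eq_sym (sameRun Hg (i := i) (j := u)) //; lia.
rewrite HS card_int //; last by lia.
have -> : i + (nth d0 v i).2 - i = (nth d0 v i).2 by lia.
by [].
Qed.

Lemma tauV_build k a n v : goodV k a n v -> buildP (tauV n v) = buildW n v.
Proof.
move=> Hg; apply/setP => -[i j]; rewrite !inE /=.
case: (ltnP i j) => //= Hij.
have Fi := goodV_flag Hg (ltn_ord i); have Fj := goodV_flag Hg (ltn_ord j).
rewrite /adjT /adjW /tauV Fi Fj.
case: (ltnP i (a k).-1) => Hi /=.
  case: (ltnP j (a k).-1) => Hj //=.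
have -> : (j < (a k).-1) = false by lia.
rewrite /=; apply: sameRun Hg _ Hij (ltn_ord j) => //.
Qed.

Lemma inW n v x y (Hx : x < n) (Hy : y < n) :
  ((Ordinal Hx, Ordinal Hy) \in buildW n v) = (x < y) && adjW v x y.
Proof. by rewrite inE. Qed.

Lemma buildW_inj k a n v1 v2 :
  (forall i : nat, leq (S i) k -> leq (a i) (a (S i))) ->
  goodV k a n v1 -> goodV k a n v2 -> buildW n v1 = buildW n v2 -> v1 = v2.
Proof.
move=> Hm G1 G2 E.
apply: (@eq_from_nth _ d0); first by rewrite (goodV_size G1) (goodV_size G2).
move=> q; rewrite (goodV_size G1) => Hq.
case: (ltnP q (a k).-1) => HqB.
  by rewrite (goodV_pre G1 HqB) (goodV_pre G2 HqB).
have Hq' : (a k).-1 <= q < n by rewrite HqB.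
have [B1 Rk1 T1 N1] := goodV_blk G1 Hq'.
have [B2 Rk2 T2 N2] := goodV_blk G2 Hq'.
have Ecol : forall v, goodV k a n v -> forall l (Hl : l.-1 < n), 0 < l <= (a k).-1 ->
    ((Ordinal Hl, Ordinal Hq) \in buildW n v) = ((nth d0 v q).1.2 == l).
  move=> v Gv l Hl Hl'; rewrite inW.
  have -> : l.-1 < q by lia.
  rewrite /adjW (goodV_pre Gv (q := l.-1)) /=; last by lia.
  rewrite (goodV_flag Gv Hq) ltnNge HqB /=.
  have -> : l.-1.+1 = l by lia.
  by rewrite eq_sym.
have Hak : forall v, goodV k a n v -> (nth d0 v q).1.2 <= (a k).-1.
  move=> v Gv; have [_ Hr Ht _] := goodV_blk Gv Hq'.
  have := amono Hm (i := k - (nth d0 v q).2) (j := k) ltac:(lia) (leqnn k); lia.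
have Ht : (nth d0 v1 q).1.2 = (nth d0 v2 q).1.2.
  have Hone : forall va vb, goodV k a n va -> goodV k a n vb -> buildW n va = buildW n vb ->
      0 < (nth d0 va q).1.2 -> (nth d0 va q).1.2 = (nth d0 vb q).1.2.
    move=> va vb Ga Gb Eab Hp.
    set l := (nth d0 va q).1.2.
    have Hl : l.-1 < n by have := Hak _ Ga; lia.
    have H1 := Ecol _ Ga l Hl ltac:(have := Hak _ Ga; lia).
    rewrite Eab (Ecol _ Gb l Hl ltac:(have := Hak _ Ga; lia)) eqxx in H1.
    by apply/esym/eqP.
  case: (posnP (nth d0 v1 q).1.2) => H0.
    case: (posnP (nth d0 v2 q).1.2) => H0'; first by rewrite H0 H0'.
    by rewrite (Hone _ _ G2 G1 (esym E) H0').
  exact: Hone.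
have Erun : forall v, goodV k a n v -> forall q' (Hq2 : q' < n), q < q' ->
    ((Ordinal Hq, Ordinal Hq2) \in buildW n v) = (q' <= q + (nth d0 v q).2).
  move=> v Gv q' Hq2 Hqq; rewrite inW Hqq /= /adjW (goodV_flag Gv Hq) ltnNge HqB /=.
  by rewrite (goodV_flag Gv Hq2); have -> : (q' < (a k).-1) = false by lia.
have Hr : forall va vb, goodV k a n va -> goodV k a n vb -> buildW n va = buildW n vb ->
    (nth d0 va q).2 <= (nth d0 vb q).2.
  move=> va vb Ga Gb Eab.
  case: (posnP (nth d0 va q).2) => [->|Hp] //.
  have [_ _ _ Hn] := goodV_blk Ga Hq'.
  have H1 := Erun _ Ga _ Hn ltac:(lia).
  rewrite Eab (Erun _ Gb _ Hn ltac:(lia)) leqnn in H1.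
  lia.
have Hrr : (nth d0 v1 q).2 = (nth d0 v2 q).2.
  by apply/eqP; rewrite eqn_leq (Hr _ _ G1 G2 E) (Hr _ _ G2 G1 (esym E)).
move: B1 B2 Ht Hrr; case: (nth d0 v1 q) => [[b1 t1] r1]; case: (nth d0 v2 q) => [[b2 t2] r2] /=.
by case: b1; case: b2 => // _ _ -> ->.
Qed.

Local Open Scope nat_scope.

Lemma nth_run k i t d : d < k.+1 - i -> nth d0 (run k (i, t)) d = (false, t, k - i - d).
Proof. by move=> Hd; rewrite (nth_map 0) ?size_iota // nth_iota. Qed.

Lemma validB_cat_run k a i t w :
  (forall i : nat, leq (S i) k -> leq (a i) (a (S i))) ->
  i <= k -> t < a i -> validB k a w -> validB k a (run k (i, t) ++ w).
Proof.
move=> Hm Hi Ht [B1 [B2 B3]].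
have Hsr := size_run k (i, t); rewrite /= in Hsr.
split.
  move=> x; rewrite mem_cat => /orP [|/B1 //].
  move/mapP => [d]; rewrite mem_iota => Hd -> /=.
  apply/andP; split; first lia.
  apply: leq_trans Ht _; apply: (amono Hm); lia.
split.
  move=> q; rewrite size_cat Hsr => Hq.
  rewrite !nth_cat Hsr.
  case: (ltnP q.+1 (k.+1 - i)) => H1.
    rewrite ifT; last by lia.
    rewrite !nth_run //; last by lia.
    by move=> _ /=; f_equal; lia.
  case: (ltnP q (k.+1 - i)) => H2.
    rewrite nth_run // /=; lia.
  have -> : q.+1 - (k.+1 - i) = (q - (k.+1 - i)).+1 by lia.
  move=> Hp; rewrite B2 //; lia.
move=> q; rewrite size_cat Hsr nth_cat Hsr => Hq.
case: (ltnP q (k.+1 - i)) => H.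
  rewrite nth_run //=; lia.
have := B3 (q - (k.+1 - i)) ltac:(lia); lia.
Qed.

Lemma validB_nil k a : validB k a [::].
Proof. by split; [|split]. Qed.

Lemma genu_valid k a :
  (forall i : nat, leq (S i) k -> leq (a i) (a (S i))) ->
  forall u m w, m <= u -> w \in genu k a u m -> validB k a w /\ size w = m.
Proof.
move=> Hm; elim=> [|u IH] m w Hmu.
  have -> : m = 0 by lia.
  by rewrite inE => /eqP ->; split; [exact: validB_nil|].
case: m Hmu => [|m] Hmu.
  by rewrite /= inE => /eqP ->; split; [exact: validB_nil|].
move=> /allpairsPdep [[i t] [w' [Hp Hw' ->]]].
have [H1 H2 H3] := choices_mem Hp; rewrite /= in H1 H2 H3.
have [Hv Hs] := IH (m.+1 - (k.+1 - i)) w' ltac:(lia) Hw'.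
split; first exact: validB_cat_run.
rewrite size_cat size_run Hs /=; lia.
Qed.

Lemma ograph_buildW n w : ograph (buildW n w).
Proof. by apply/forall_inP => e; rewrite inE => /andP []. Qed.

Lemma Pn_upper k a n : #|Pn (PP k a) n| <= size (allW k a n).
Proof.
rewrite -(size_map (buildW n)).
apply: leq_trans (card_size _).
apply: subset_leq_card; apply/subsetP => E; rewrite inE => /andP [_ /PPP [tau [V ->]]].
rewrite (buildP_psi V); apply: map_f; exact: psi_mem.
Qed.

Lemma Pn_lower k a n :
  (forall i : nat, leq (S i) k -> leq (a i) (a (S i))) -> (a k).-1 <= n ->
  size (genu k a n (n - (a k).-1)) <= #|Pn (PP k a) n|.
Proof.
move=> Hm HB.
have Gv : forall w, w \in genu k a n (n - (a k).-1) -> goodV k a n (pre0 (a k).-1 ++ w).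
  move=> w Hw; have [Hv Hs] := genu_valid Hm (leq_subr _ _) Hw.
  by exists w; split.
set L := [seq buildW n (pre0 (a k).-1 ++ w) | w <- genu k a n (n - (a k).-1)].
have HU : uniq L.
  rewrite map_inj_in_uniq; first exact: genu_uniq.
  move=> w1 w2 H1 H2 E.
  have := buildW_inj Hm (Gv _ H1) (Gv _ H2) E.
  by move/eqP; rewrite eqseq_cat // => /andP [_ /eqP].
rewrite -(size_map (fun w => buildW n (pre0 (a k).-1 ++ w))) -/L -(card_uniqP HU).
apply: subset_leq_card; apply/subsetP => E /mapP [w Hw ->].
rewrite inE ograph_buildW /=.
apply/PPP; exists (tauV n (pre0 (a k).-1 ++ w)); split.
  exact: tauV_valid (Gv _ Hw).
by rewrite (tauV_build (Gv _ Hw)).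
Qed.

Local Open Scope R_scope.

Lemma sum_ge_term (g : nat -> R) k j : (forall i, 0 <= g i) -> (j <= k)%nat -> g j <= sum_f_R0 g k.
Proof.
move=> H; elim: k => [|k IH] Hj.
  have -> : j = 0%nat by lia.
  rewrite /=; lra.
case: (ltnP j k.+1) => Hjk.
  have := IH ltac:(lia); have := H k.+1; rewrite /=; lra.
have -> : j = k.+1 by lia.
have : 0 <= sum_f_R0 g k by elim: (k) => [|k' IHk] /=; [apply: H | have := H k'.+1; lra].
rewrite /=; lra.
Qed.

Lemma sum_ge0 (g : nat -> R) k : (forall i, 0 <= g i) -> 0 <= sum_f_R0 g k.
Proof. move=> H; elim: k => [|k IH] /=; [apply: H | have := H k.+1; lra]. Qed.

Lemma cont_poly (a : nat -> nat) k : continuity (fun x => sum_f_R0 (fun i => INR (a i) * x ^ i) k).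
Proof.
elim: k => [|k IH] /=.
  apply: (continuity_mult (fun _ => INR (a 0%nat)) (fun x => x ^ 0)).
    by apply: continuity_const => x y.
  exact: derivable_continuous (derivable_pow 0).
apply: (continuity_plus (fun x => sum_f_R0 (fun i => INR (a i) * x ^ i) k) (fun x => INR (a k.+1) * x ^ k.+1)) => //.
apply: (continuity_mult (fun _ => INR (a k.+1)) (fun x => x ^ k.+1)).
  by apply: continuity_const => x y.
exact: derivable_continuous (derivable_pow _).
Qed.

Lemma c_ge1 k (a : nat -> nat) c :
  (forall i : nat, leq i k -> leq 1 (a i)) ->
  (forall x : R, charpoly_eq k a x -> x <= c) -> 1 <= c.
Proof.
move=> Hpos Hl.
set f := fun x => x ^ k.+1 - sum_f_R0 (fun i => INR (a i) * x ^ i) k.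
have Hf : continuity f.
  apply: (continuity_minus (fun x => x ^ k.+1)); last exact: cont_poly.
  exact: derivable_continuous (derivable_pow _).
set S := sum_f_R0 (fun i => INR (a i)) k.
have HS : 1 <= S.
  have := @sum_ge_term (fun i => INR (a i)) k 0%nat (fun i => pos_INR _) (leq0n k).
  have := Hpos 0%nat (leq0n k); move/leP/le_INR; rewrite /S /=; lra.
have Hf1 : f 1 <= 0.
  rewrite /f pow1.
  have -> : sum_f_R0 (fun i => INR (a i) * 1 ^ i) k = S.
    by rewrite /S; apply: sum_eq => i _; rewrite pow1; lra.
  lra.
set y := 1 + S.
have Hy1 : 1 <= y by rewrite /y; lra.
have Hfy : 0 <= f y.
  rewrite /f.
  have H1 : sum_f_R0 (fun i => INR (a i) * y ^ i) k <= sum_f_R0 (fun i => INR (a i) * y ^ k) k.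
    apply: sum_Rle => i Hi; apply: Rmult_le_compat_l; first exact: pos_INR.
    by apply: Rle_pow => //; apply/leP.
  have H2 : sum_f_R0 (fun i => INR (a i) * y ^ k) k = S * y ^ k.
    by rewrite /S Rmult_comm scal_sum.
  have H3 : 0 < y ^ k by apply: pow_lt; lra.
  rewrite /= in H1 *; rewrite H2 in H1.
  have : S * y ^ k <= y * y ^ k by apply: Rmult_le_compat_r; [lra | rewrite /y; lra].
  lra.
have [z [[Hz1 _] Hz]] := IVT_cor f 1 y Hf Hy1 ltac:(nra).
apply: Rle_trans Hz1 (Hl z _).
rewrite /charpoly_eq; rewrite /f in Hz; lra.
Qed.

Local Close Scope R_scope.

Lemma INR_sumn_le (T : Type) (s : seq T) (h : T -> nat) (X : R) :
  (forall x, (INR (h x) <= X)%R) -> (INR (sumn [seq h x | x <- s]) <= INR (size s) * X)%R.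
Proof.
move=> H; elim: s => [|x s IH]; first by rewrite /=; lra.
have E1 : size (x :: s) = (size s).+1 by [].
have E2 : sumn [seq h y | y <- x :: s] = addn (h x) (sumn [seq h y | y <- s]) by [].
rewrite E1 E2 plus_INR S_INR; have := H x; lra.
Qed.

Lemma Pn_upperR k a c n : (1 <= c)%R -> charpoly_eq k a c ->
  (INR #|Pn (PP k a) n| <= INR (size (allLists (a k).-1 (a k).-1)) * c ^ n)%R.
Proof.
move=> Hc Hr.
apply: Rle_trans (le_INR _ _ (elimT leP (Pn_upper k a n))) _.
rewrite /allW size_allpairs_dep.
apply: INR_sumn_le => l.
apply: Rle_trans (gen_upper Hc Hr (leq_subr _ _)) _.
apply: Rle_pow => //; apply/leP; exact: leq_subr.
Qed.

Lemma Pn_lowerR k a c n : (1 <= c)%R -> charpoly_eq k a c ->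
  (forall i : nat, leq i k -> leq 1 (a i)) ->
  (forall i : nat, leq (S i) k -> leq (a i) (a (S i))) -> ((a k).-1 <= n)%nat ->
  (c ^ (n - (a k).-1) <= c ^ k.+1 * INR #|Pn (PP k a) n|)%R.
Proof.
move=> Hc Hr Hpos Hm HB.
apply: Rle_trans (gen_lower Hc Hr Hpos (leq_subr (a k).-1 n)) _.
apply: Rmult_le_compat_l; first by apply: pow_le; lra.
apply: le_INR; apply/leP; exact: Pn_lower.
Qed.

Lemma ln_le' x y : (0 < x)%R -> (x <= y)%R -> (ln x <= ln y)%R.
Proof.
move=> Hx [H|->]; last lra.
by left; apply: ln_increasing.
Qed.

Open Scope R_scope.

Theorem theorem31 (k : nat) (a : nat -> nat)
  (Hpos : forall i : nat, leq i k -> leq 1 (a i))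
  (Hmono : forall i : nat, leq (S i) k -> leq (a i) (a (S i)))
  (c : R) (Hroot : charpoly_eq k a c)
  (Hlargest : forall x : R, charpoly_eq k a x -> x <= c) :
  exists P : oprop, hereditary P /\
    exists eps : nat -> R, Un_cv eps 0 /\
      exists N : nat, forall n : nat, leq N n ->
        INR #|Pn P n| = Rpower c ((1 + eps n) * INR n).
Proof.
have Hc1 := c_ge1 Hpos Hlargest.
have HK : 0 < c ^ k.+1 by apply: pow_lt; lra.
exists (PP k a); split; first exact: hereditary_PP.
set B := (a k).-1.
set M := INR (size (allLists B B)).
set X := fun n => INR #|Pn (PP k a) n|.
have HU : forall n, X n <= M * c ^ n by move=> n; exact: Pn_upperR.
have HL : forall n, (B <= n)%nat -> c ^ (n - B) <= c ^ k.+1 * X n.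
  by move=> n Hn; exact: Pn_lowerR.
have HM : 1 <= M.
  have Hs : (1 <= size (allLists B B))%nat by case: (B).
  by rewrite /M; apply: (le_INR 1); apply/leP.
have HXpos : forall n, (B <= n)%nat -> 0 < X n.
  move=> n Hn; have := HL n Hn; have : 0 < c ^ (n - B) by apply: pow_lt; lra.
  move=> H1 H2; have H3 : 0 < c ^ k.+1 * X n by lra.
  by apply: (Rmult_lt_reg_l (c ^ k.+1)); lra.
case: (Req_dec c 1) => Hc.
-
  have Hak : a k = 1%nat.
    have := @sum_ge_term (fun i => INR (a i) * c ^ i) k k (fun i => Rmult_le_pos _ _ (pos_INR _) (pow_le c i ltac:(lra))) (leqnn k).
    rewrite -Hroot Hc !pow1 Rmult_1_r => H.
    have := Hpos k (leqnn k); move/leP/le_INR => H'.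
    have : (a k <= 1)%nat by apply/leP; apply: INR_le; rewrite /= in H' *; lra.
    move: (Hpos k (leqnn k)); lia.
  have HB0 : B = 0%nat by rewrite /B Hak.
  have HM1 : M = 1 by rewrite /M HB0 /=; lra.
  exists (fun _ => 0); split.
    by move=> e He; exists 0%nat => n _; rewrite /Rdist Rminus_0_r Rabs_R0.
  exists 0%nat => n _.
  rewrite /Rpower Hc ln_1 Rmult_0_r exp_0.
  have := HU n; have := HL n ltac:(rewrite HB0; lia).
  rewrite HM1 Hc !pow1 /X; lra.
-
  have Hc' : 1 < c by lra.
  have Hlc : 0 < ln c by rewrite -ln_1; apply: ln_increasing; lra.
  have HlM : 0 <= ln M by rewrite -ln_1; apply: ln_le'; lra.
  set eps := fun n : nat => if n is 0%nat then 0 else ln (X n) / (INR n * ln c) - 1.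
  have Key : forall n, (B <= n)%nat -> (0 < n)%nat ->
      eps n * (INR n * ln c) = ln (X n) - INR n * ln c /\
      - INR (B + k.+1) * ln c <= ln (X n) - INR n * ln c <= ln M.
    move=> n Hn Hn0.
    have Hnr : 0 < INR n by apply: lt_0_INR; apply/ltP.
    split.
      rewrite /eps; case: n Hn Hn0 Hnr => // n _ _ Hnr; field; split; lra.
    have HX := HXpos n Hn.
    split.
      have := ln_le' (pow_lt c (n - B) ltac:(lra)) (HL n Hn).
      rewrite ln_mult // ln_pow; last lra.
      rewrite ln_pow; last lra.
      rewrite minus_INR; last by apply/leP.
      rewrite plus_INR; nra.
    have := ln_le' HX (HU n).
    rewrite ln_mult; [|lra|apply: pow_lt; lra].
    rewrite ln_pow; last lra.
    lra.
  exists eps; split.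
    move=> e He.
    set D := INR (B + k.+1) * ln c + ln M.
    have HD : 0 <= D by rewrite /D; have := pos_INR (B + k.+1); nra.
    have [N1 HN1] := INR_archimed (e * ln c) D ltac:(nra).
    exists (maxn (maxn N1 B) 1) => n Hn.
    have Hn' : (maxn (maxn N1 B) 1 <= n)%nat by apply/leP; lia.
    have HnB : (B <= n)%nat by move: Hn'; rewrite !geq_max => /andP [/andP [_ ->] _].
    have Hn0 : (0 < n)%nat by move: Hn'; rewrite !geq_max => /andP [_ ->].
    have HN1n : INR N1 <= INR n.
      by apply: le_INR; apply/leP; move: Hn'; rewrite !geq_max => /andP [/andP [-> _] _].
    have [E [H1 H2]] := Key n HnB Hn0.
    have Hnr : 0 < INR n by apply: lt_0_INR; apply/ltP.
    have Hnl : 0 < INR n * ln c by nra.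
    have HnD : D < INR n * (e * ln c).
      have Hel : 0 <= e * ln c by nra.
      have := Rmult_le_compat_r _ _ _ Hel HN1n; lra.
    have HBK : 0 <= INR (B + k.+1) * ln c by have := pos_INR (B + k.+1); nra.
    rewrite /Rdist Rminus_0_r; apply: Rabs_def1.
      apply: (Rmult_lt_reg_r (INR n * ln c)) => //; rewrite E; rewrite /D in HnD; lra.
    apply: (Rmult_lt_reg_r (INR n * ln c)) => //; rewrite E; rewrite /D in HnD; lra.
  exists (maxn B 1) => n Hn.
  have HnB : (B <= n)%nat by move: Hn; rewrite geq_max => /andP [].
  have Hn0 : (0 < n)%nat by move: Hn; rewrite geq_max => /andP [].
  have [E _] := Key n HnB Hn0.
  have Hnr : 0 < INR n by apply: lt_0_INR; apply/ltP.
  rewrite /Rpower.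
  have -> : (1 + eps n) * INR n * ln c = ln (X n).
    have : eps n * (INR n * ln c) + INR n * ln c = ln (X n) by lra.
    move=> <-; ring.
  by rewrite exp_ln //; apply: HXpos.
Qed.
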